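(* Let $P\in\mathcal{N}_2$ via the pair of chain covers $\{\mathcal{C}_1,\mathcal{C}_2\}$, and let $\bm{c}\subseteq P$ be a convex subposet of $P$ which is a chain. Then there is a chain in $\mathcal{C}_1$ or a chain in $\mathcal{C}_2$ that contains all of $\bm{c}$.
   Context: All posets are finite. An edge of a poset is a covering relation $x \lessdot y$. A chain cover of a poset $P$ is a set of pairwise disjoint saturated chains whose union is $P$. A labeling of $P$ is a map $\lambda:P\to\mathbb{R}$. For a chain cover $\mathcal{C}$, $\mathcal{C}$-sorting a labeling means: for each chain $\bm{c}\in\mathcal{C}$, permute the labels $\{\lambda(v): v\in \bm{c}\}$ among the elements of $\bm{c}$ so that they are non-decreasing from the minimum of $\bm{c}$ to its maximum. A finite poset $P$ is in $\mathcal{N}_2$ via $\{\mathcal{C}_1,\mathcal{C}_2\}$ if $\{\mathcal{C}_1,\mathcal{C}_2\}$ is an unordered pair of chain covers of $P$ such that (1) for every labeling of $P$ and for $i=1$ and $i=2$, first $\mathcal{C}_i$-sorting and then $\mathcal{C}_{3-i}$-sorting leaves the labels non-decreasing along every chain of $\mathcal{C}_i$; and (2) every edge of $P$ is contained in some chain of $\mathcal{C}_1$ or of $\mathcal{C}_2$. A subset $S$ is convex if $x\le z\le y$ with $x,y\in S$ implies $z\in S$. *)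

(* Defs.v *)
From HB Require Import structures.
From mathcomp Require Import all_boot all_order all_algebra all_fingroup.
From mathcomp Require Import reals.
Set Implicit Arguments. Unset Strict Implicit. Unset Printing Implicit Defensive.
Import Order.TTheory GRing.Theory Num.Theory.

Section N2Defs.
Context {disp : Order.disp_t} {P : finPOrderType disp}.
Local Open Scope order_scope.

Definition covers (x y : P) : bool :=
  (x < y) && [forall z : P, ~~ ((x < z) && (z < y))].

Definition is_chain (S : {set P}) : Prop :=
  forall x y, x \in S -> y \in S -> (x <= y) || (y <= x).

Definition saturated_chain (S : {set P}) : Prop :=
  [/\ S != set0, is_chain S &
      forall x y, x \in S -> y \in S -> x < y ->
        (forall z, z \in S -> ~~ ((x < z) && (z < y))) -> covers x y].

Definition chain_cover (C : {set {set P}}) : Prop :=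
  partition C [set: P] /\ forall c, c \in C -> saturated_chain c.

Definition convex (S : {set P}) : Prop :=
  forall x y z, x \in S -> y \in S -> x <= z -> z <= y -> z \in S.

Definition is_Csort (R : realType) (C : {set {set P}}) (lam mu : P -> R) : Prop :=
  forall c, c \in C ->
    (exists s : {perm P}, perm_on c s /\ forall x, x \in c -> mu x = lam (s x)) /\
    (forall x y, x \in c -> y \in c -> x <= y -> (mu x <= mu y)%R).

Definition in_N2 (R : realType) (C1 C2 : {set {set P}}) : Prop :=
  [/\ chain_cover C1, chain_cover C2,
      (forall (Ci Cj : {set {set P}}), (Ci, Cj) = (C1, C2) \/ (Ci, Cj) = (C2, C1) ->
        forall lam mu nu : P -> R, is_Csort Ci lam mu -> is_Csort Cj mu nu ->
        forall c, c \in Ci -> forall x y, x \in c -> y \in c -> x <= y -> (nu x <= nu y)%R) &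
      (forall x y, covers x y ->
        exists2 c, c \in C1 :|: C2 & (x \in c) && (y \in c))].

End N2Defs.

(* Main.v *)
Require Import Defs.
From HB Require Import structures.
From mathcomp Require Import all_boot all_order all_algebra all_fingroup.
From mathcomp Require Import reals.
Set Implicit Arguments. Unset Strict Implicit. Unset Printing Implicit Defensive.
Import Order.TTheory GRing.Theory Num.Theory.
Local Open Scope order_scope.

Lemma cover_same {disp : Order.disp_t} {P : finPOrderType disp}
  (C : {set {set P}}) d1 d2 x :
  chain_cover C -> d1 \in C -> d2 \in C -> x \in d1 -> x \in d2 -> d1 = d2.
Proof.
case=> /and3P [_ tI _] _ h1 h2 x1 x2.
by rewrite -(def_pblock tI h1 x1) (def_pblock tI h2 x2).
Qed.

Lemma cover_ex {disp : Order.disp_t} {P : finPOrderType disp}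
  (C : {set {set P}}) x :
  chain_cover C -> exists2 d, d \in C & x \in d.
Proof.
case=> /and3P [/eqP cv _ _] _.
have hx : x \in cover C by rewrite cv inE.
by exists (pblock C x); [apply: pblock_mem | rewrite mem_pblock].
Qed.

Lemma chain_max {disp : Order.disp_t} {P : finPOrderType disp} (S : {set P}) :
  S != set0 -> is_chain S -> exists2 m, m \in S & forall y, y \in S -> y <= m.
Proof.
case/set0Pn=> x0 Hx0 Hc.
case: (@arg_maxnP _ x0 (mem S) (fun i => #|[set y | y < i]|) Hx0) => m Hm Hmax.
exists m => // y Hy.
case/orP: (Hc _ _ Hy Hm) => // Hmy.
case: (eqVneq y m) => [->//|Hne].
have Hlt: m < y by rewrite lt_def Hne.
have : #|[set z | z < m]| < #|[set z | z < y]|.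
  apply: proper_card; apply/properP; split.
    by apply/subsetP=> z; rewrite !inE => /lt_trans; apply.
  by exists m; rewrite !inE ?ltxx.
by move=> H; have := leq_trans H (Hmax y Hy); rewrite ltnn.
Qed.

Lemma chain_min {disp : Order.disp_t} {P : finPOrderType disp} (S : {set P}) :
  S != set0 -> is_chain S -> exists2 m, m \in S & forall y, y \in S -> m <= y.
Proof.
case/set0Pn=> x0 Hx0 Hc.
case: (@arg_maxnP _ x0 (mem S) (fun i => #|[set y | i < y]|) Hx0) => m Hm Hmax.
exists m => // y Hy.
case/orP: (Hc _ _ Hy Hm) => // Hmy.
case: (eqVneq y m) => [->//|Hne].
have Hlt: y < m by rewrite lt_def eq_sym Hne.
have : #|[set z | m < z]| < #|[set z | y < z]|.
  apply: proper_card; apply/properP; split.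
    by apply/subsetP=> z; rewrite !inE; apply: lt_trans.
  by exists m; rewrite !inE ?ltxx.
by move=> H; have := leq_trans H (Hmax y Hy); rewrite ltnn.
Qed.

Definition SortHyp (R : realType) {disp : Order.disp_t} {P : finPOrderType disp}
  (Ci Cj : {set {set P}}) : Prop :=
  forall lam mu nu : P -> R, is_Csort Ci lam mu -> is_Csort Cj mu nu ->
  forall c, c \in Ci -> forall x y, x \in c -> y \in c -> x <= y -> (nu x <= nu y)%R.

Definition lam0 (R : realType) {disp : Order.disp_t} {P : finPOrderType disp}
  (u w x : P) : R := if (u <= x) && (x != w) then 1%R else 0%R.

Lemma lam0_mono (R : realType) {disp : Order.disp_t} {P : finPOrderType disp}
  (u w x y : P) : x <= y -> (u <= x -> y = w -> x != w -> False) ->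
  (lam0 R u w x <= lam0 R u w y)%R.
Proof.
rewrite /lam0 => xy H.
case: ifP => [/andP [ux xw]|_]; last by case: ifP => _; rewrite ?ler01.
have uy : u <= y by apply: le_trans xy.
case: (eqVneq y w) => [yw|ynw]; first by case: (H ux yw xw).
by rewrite uy /= lexx.
Qed.

Lemma core (R : realType) {disp : Order.disp_t} {P : finPOrderType disp}
  (Ci Cj : {set {set P}}) D D' u v m :
  chain_cover Ci -> chain_cover Cj -> SortHyp R Ci Cj ->
  D \in Ci -> D' \in Cj -> u \in D -> v \in D -> u \notin D' -> v \in D' ->
  m \in D' -> m \notin D -> u <= v -> u <= m -> v != m ->
  (forall x, u <= x -> x <= m -> x != m -> x \in D) ->
  (forall x, u <= x -> x <= v -> x != v -> x = u) -> False.
Proof.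
move=> cCi cCj SH DC D'C uD vD uD' vD' mD' mD uv um vm H1 H2.
pose lam := lam0 R u m. pose nu := lam0 R u v.
have nuE : forall x, nu x = lam (tperm v m x).
  move=> x; rewrite /nu /lam /lam0.
  case: (eqVneq x v) => [->|xv].
    by rewrite tpermL eqxx /= !andbF.
  case: (eqVneq x m) => [->|xm].
    by rewrite tpermR um uv vm.
  have -> : tperm v m x = x by rewrite tpermD // eq_sym.
  by rewrite xm.
have S1 : is_Csort Ci lam lam.
  move=> d dC; split.
    by exists 1%g; split; [exact: perm_on1 | move=> x _; rewrite perm1].
  move=> x y xd yd xy; apply: lam0_mono => // ux ym xm.
  have xD : x \in D by apply: H1 => //; rewrite -ym.
  have dD := cover_same cCi dC DC xd xD.
  by move: mD; rewrite -dD -ym yd.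
have S2 : is_Csort Cj lam nu.
  move=> d dC; split.
    case: (eqVneq d D') => [->|dD'].
      exists (tperm v m); split; last by move=> x _; rewrite nuE.
      apply: subset_trans (tperm_on v m) _.
      by apply/subsetP=> x; rewrite !inE => /orP [] /eqP ->.
    exists 1%g; split; first exact: perm_on1.
    move=> x xd; rewrite nuE perm1 tpermD //.
      by apply/eqP=> E; subst x; case/eqP: dD'; apply: cover_same cCj dC D'C xd vD'.
    by apply/eqP=> E; subst x; case/eqP: dD'; apply: cover_same cCj dC D'C xd mD'.
  move=> x y xd yd xy; apply: lam0_mono => // ux yv xv.
  have xu : x = u by apply: H2 => //; rewrite -yv.
  subst x y.
  have dD := cover_same cCj dC D'C yd vD'.
  by move: uD'; rewrite -dD xd.
have := SH lam lam nu S1 S2 D DC u v uD vD uv.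
rewrite /nu /lam0 lexx eqxx andbF.
have -> : (u != v) by apply/eqP=> E; move: uD'; rewrite E vD'.
by rewrite ler10.
Qed.


Lemma step (R : realType) {disp : Order.disp_t} {P : finPOrderType disp}
  (Ci Cj : {set {set P}}) (c : {set P}) D D' u v m :
  chain_cover Ci -> chain_cover Cj -> (Ci = Cj \/ SortHyp R Ci Cj) ->
  D \in Ci -> D' \in Cj -> convex c ->
  c :\ m \subset D -> c :\ u \subset D' ->
  u \in c -> v \in c -> m \in c ->
  (forall x, x \in c -> u <= x) -> (forall x, x \in c -> x <= m) ->
  (forall x, x \in c :\ u -> v <= x) -> u != m -> v != m -> v != u ->
  c \subset D \/ c \subset D'.
Proof.
move=> cCi cCj HC DC D'C cvx s1 s2 uc vc mc Hu Hm Hv um vm vu.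
have uD : u \in D by apply: (subsetP s1); rewrite !inE um uc.
have vD : v \in D by apply: (subsetP s1); rewrite !inE vm vc.
have vD' : v \in D' by apply: (subsetP s2); rewrite !inE vu vc.
have mD' : m \in D' by apply: (subsetP s2); rewrite !inE eq_sym um mc.
case: (boolP (m \in D)) => mD.
  left; apply/subsetP => x xc; case: (eqVneq x m) => [->//|xm].
  by apply: (subsetP s1); rewrite !inE xm xc.
case: (boolP (u \in D')) => uD'.
  right; apply/subsetP => x xc; case: (eqVneq x u) => [->//|xu].
  by apply: (subsetP s2); rewrite !inE xu xc.
exfalso; case: HC => [E|SH].
  subst Cj; have E := cover_same cCi DC D'C vD vD'.
  by move: mD; rewrite E mD'.
apply: (core cCi cCj SH DC D'C uD vD uD' vD' mD' mD (Hu v vc) (Hu m mc) vm).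
  move=> x ux xm xnm; apply: (subsetP s1); rewrite !inE xnm.
  exact: (cvx u m x).
move=> x ux xv xnv; have xc : x \in c by exact: (cvx u v x).
case: (eqVneq x u) => [//|xu].
have vx : v <= x by apply: Hv; rewrite !inE xu xc.
by case/eqP: xnv; apply/le_anti; rewrite xv vx.
Qed.

Lemma convex_max {disp : Order.disp_t} {P : finPOrderType disp} (c : {set P}) m :
  convex c -> (forall x, x \in c -> x <= m) -> convex (c :\ m).
Proof.
move=> cvx Hm x y z; rewrite !inE => /andP [xm xc] /andP [ym yc] xz zy.
have zc : z \in c by exact: (cvx x y z).
rewrite zc andbT; apply/eqP => E; subst z.
by case/eqP: ym; apply/le_anti; rewrite zy Hm.
Qed.

Lemma convex_min {disp : Order.disp_t} {P : finPOrderType disp} (c : {set P}) u :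
  convex c -> (forall x, x \in c -> u <= x) -> convex (c :\ u).
Proof.
move=> cvx Hu x y z; rewrite !inE => /andP [xu xc] /andP [yu yc] xz zy.
have zc : z \in c by exact: (cvx x y z).
rewrite zc andbT; apply/eqP => E; subst z.
by case/eqP: xu; apply/le_anti; rewrite xz Hu.
Qed.

Lemma chainD1 {disp : Order.disp_t} {P : finPOrderType disp} (c : {set P}) a :
  is_chain c -> is_chain (c :\ a).
Proof. by move=> chn x y; rewrite !inE => /andP[_ xc] /andP[_ yc]; apply: chn. Qed.

Lemma cardD1lt {disp : Order.disp_t} {P : finPOrderType disp} (c : {set P}) a n :
  a \in c -> #|c| < n.+1 -> #|c :\ a| < n.
Proof. by move=> ac; rewrite (cardsD1 a c) ac. Qed.

Theorem lemma2p2 (R : realType) (disp : Order.disp_t) (P : finPOrderType disp)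
  (C1 C2 : {set {set P}}) (c : {set P}) :
  in_N2 R C1 C2 -> convex c -> is_chain c -> c != set0 ->
  (exists2 d, d \in C1 & c \subset d) \/ (exists2 d, d \in C2 & c \subset d).
Proof.
case=> cC1 cC2 H3 H4.
have SH12 : SortHyp R C1 C2 := H3 C1 C2 (or_introl erefl).
have SH21 : SortHyp R C2 C1 := H3 C2 C1 (or_intror erefl).
move=> cvx chn ne.
move: (ltnSn #|c|); move: {2}#|c|.+1 => n.
elim: n c cvx chn ne => [//|n IH] c cvx chn ne lt.
have [u uc Hu] := chain_min ne chn.
have [m mc Hm] := chain_max ne chn.
case: (eqVneq u m) => [um|um].
  have [d dC ud] := cover_ex u cC1.
  left; exists d => //; apply/subsetP => x xc.
  have -> : x = u by apply/le_anti; rewrite Hu // um Hm.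
  exact: ud.
have ne2 : c :\ u != set0 by apply/set0Pn; exists m; rewrite !inE eq_sym um.
have [v v2 Hv] := chain_min ne2 (chainD1 (a:=u) chn).
move: (v2); rewrite !inE => /andP [vu vc].
case: (eqVneq v m) => [vm|vm].
  have cov : covers u m.
    apply/andP; split; first by rewrite lt_def eq_sym um Hu.
    apply/forallP => z; apply/negP => /andP [uz zm].
    have zc : z \in c by apply: (cvx u m z) => //; apply: ltW.
    case: (eqVneq z u) => [E|zu]; first by move: uz; rewrite E ltxx.
    have : v <= z by apply: Hv; rewrite !inE zu.
    by rewrite vm => mz; move: (lt_le_trans zm mz); rewrite ltxx.
  have [e eC /andP [ue me]] := H4 u m cov.
  have sub : c \subset e.
    apply/subsetP => x xc; case: (eqVneq x u) => [->//|xu].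
    have vx : v <= x by apply: Hv; rewrite !inE xu xc.
    have -> : x = m by apply/le_anti; rewrite Hm // -vm vx.
    exact: me.
  by move: eC; rewrite inE => /orP [eC|eC]; [left|right]; exists e.
have IH1 := IH (c :\ m) (convex_max cvx Hm) (chainD1 (a:=m) chn).
have IH2 := IH (c :\ u) (convex_min cvx Hu) (chainD1 (a:=u) chn) ne2 (cardD1lt uc lt).
have ne1 : c :\ m != set0 by apply/set0Pn; exists u; rewrite !inE um.
have {IH1} IH1 := IH1 ne1 (cardD1lt mc lt).
have S := fun Ci Cj D D' cCi cCj HC DC D'C s1 s2 =>
  @step R disp P Ci Cj c D D' u v m cCi cCj HC DC D'C cvx s1 s2 uc vc mc Hu Hm Hv um vm vu.
case: IH1 => [[D DC s1]|[D DC s1]]; case: IH2 => [[D' D'C s2]|[D' D'C s2]].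
- by case: (S _ _ _ _ cC1 cC1 (or_introl erefl) DC D'C s1 s2) => h; left; [exists D|exists D'].
- by case: (S _ _ _ _ cC1 cC2 (or_intror SH12) DC D'C s1 s2) => h; [left; exists D|right; exists D'].
- by case: (S _ _ _ _ cC2 cC1 (or_intror SH21) DC D'C s1 s2) => h; [right; exists D|left; exists D'].
- by case: (S _ _ _ _ cC2 cC2 (or_introl erefl) DC D'C s1 s2) => h; right; [exists D|exists D'].
Qed.
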